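(* Let $A \in \mathbb{R}^{m \times n}$ have full column rank and let $p \in [1,\infty]$. Then there exists an invertible matrix $R \in \mathbb{R}^{n \times n}$ such that $\bar\kappa_p(A R^{-1}) \le n$.
   Context: For $p\in[1,\infty]$ let $q$ be the dual exponent ($1/p+1/q=1$), so $\|\cdot\|_q$ is the dual norm of $\|\cdot\|_p$. For a matrix $M \in \mathbb{R}^{m \times n}$, write $|M|_p = (\sum_{i,j}|M_{ij}|^p)^{1/p}$ for the entrywise $\ell_p$ norm (the maximum absolute entry if $p=\infty$). $M$ is called $(\alpha,\beta,p)$-conditioned if (1) $|M|_p \le \alpha$ and (2) $\|z\|_q \le \beta \|Mz\|_p$ for all $z\in\mathbb{R}^n$. The $(\alpha,\beta,p)$-condition number $\bar\kappa_p(M)$ is the minimum (infimum) of $\alpha\beta$ over all $(\alpha,\beta)$ for which $M$ is $(\alpha,\beta,p)$-conditioned. *)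

(* Defs.v *)
From Stdlib Require Import Reals List.
Import ListNotations.
Open Scope R_scope.

(* Matrices/vectors are functions on indices; only indices i < m, j < n matter. *)
Definition vec := nat -> R.
Definition mat := nat -> nat -> R.

Inductive pexp : Type := PFin (p : R) | PInf.

Definition valid_pexp (p : pexp) : Prop :=
  match p with PFin r => 1 <= r | PInf => True end.

(* dual exponent q with 1/p + 1/q = 1 *)
Definition dual_pexp (p : pexp) : pexp :=
  match p with
  | PInf => PFin 1
  | PFin r => if Req_EM_T r 1 then PInf else PFin (r / (r - 1))
  end.

(* x^y for x >= 0, with 0^y = 0 (y > 0) *)
Definition rpow (x y : R) : R := if Rlt_dec 0 x then Rpower x y else 0.

Definition sumn (n : nat) (f : nat -> R) : R := fold_right Rplus 0 (map f (seq 0 n)).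
Definition maxn (n : nat) (f : nat -> R) : R := fold_right Rmax 0 (map f (seq 0 n)).

Definition vnorm (p : pexp) (n : nat) (z : vec) : R :=
  match p with
  | PFin r => rpow (sumn n (fun i => rpow (Rabs (z i)) r)) (/ r)
  | PInf => maxn n (fun i => Rabs (z i))
  end.

Definition entnorm (p : pexp) (m n : nat) (M : mat) : R :=
  match p with
  | PFin r => rpow (sumn m (fun i => sumn n (fun j => rpow (Rabs (M i j)) r))) (/ r)
  | PInf => maxn m (fun i => maxn n (fun j => Rabs (M i j)))
  end.

Definition mulmv (n : nat) (M : mat) (z : vec) : vec :=
  fun i => sumn n (fun j => M i j * z j).

Definition mulmm (k : nat) (A B : mat) : mat :=
  fun i j => sumn k (fun l => A i l * B l j).

Definition idm : mat := fun i j => if Nat.eq_dec i j then 1 else 0.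

Definition full_col_rank (m n : nat) (A : mat) : Prop :=
  forall z : vec, (forall i, (i < m)%nat -> mulmv n A z i = 0) ->
    forall j, (j < n)%nat -> z j = 0.

Definition inverse_of (n : nat) (Rm Rinv : mat) : Prop :=
  (forall i j, (i < n)%nat -> (j < n)%nat -> mulmm n Rm Rinv i j = idm i j) /\
  (forall i j, (i < n)%nat -> (j < n)%nat -> mulmm n Rinv Rm i j = idm i j).

Definition conditioned (p : pexp) (m n : nat) (M : mat) (alpha beta : R) : Prop :=
  entnorm p m n M <= alpha /\
  forall z : vec, vnorm (dual_pexp p) n z <= beta * vnorm p m (mulmv n M z).

Definition cond_products (p : pexp) (m n : nat) (M : mat) (t : R) : Prop :=
  exists alpha beta, 0 <= alpha /\ 0 <= beta /\
    conditioned p m n M alpha beta /\ t = alpha * beta.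

Definition is_glb (S : R -> Prop) (x : R) : Prop :=
  (forall y, S y -> x <= y) /\ (forall x', (forall y, S y -> x' <= y) -> x' <= x).

(* kappa_p(M) = k, the infimum of cond_products (only meaningful when attained as a real) *)
Definition cond_number_is (p : pexp) (m n : nat) (M : mat) (k : R) : Prop :=
  is_glb (cond_products p m n M) k.

(* Main.v *)
Require Import Defs.
From Stdlib Require Import Reals Lra Lia List.
Open Scope R_scope.


Lemma fsum_le (f g : nat -> R) (l : list nat) :
  (forall i, In i l -> f i <= g i) ->
  fold_right Rplus 0 (map f l) <= fold_right Rplus 0 (map g l).
Proof.
induction l as [|a l IH]; simpl; intros H; [lra|].
assert (f a <= g a) by (apply H; auto).
assert (fold_right Rplus 0 (map f l) <= fold_right Rplus 0 (map g l)) by (apply IH; auto).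
lra.
Qed.

Lemma fsum_ext (f g : nat -> R) (l : list nat) :
  (forall i, In i l -> f i = g i) ->
  fold_right Rplus 0 (map f l) = fold_right Rplus 0 (map g l).
Proof.
induction l as [|a l IH]; simpl; intros H; [lra|].
rewrite (H a) by auto. rewrite IH by auto. reflexivity.
Qed.

Lemma fsum_ge0 (f : nat -> R) (l : list nat) :
  (forall i, In i l -> 0 <= f i) -> 0 <= fold_right Rplus 0 (map f l).
Proof.
induction l as [|a l IH]; simpl; intros H; [lra|].
assert (0 <= f a) by (apply H; auto).
assert (0 <= fold_right Rplus 0 (map f l)) by (apply IH; auto). lra.
Qed.

Lemma fsum_term (f : nat -> R) (l : list nat) i :
  (forall i, In i l -> 0 <= f i) -> In i l -> f i <= fold_right Rplus 0 (map f l).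
Proof.
induction l as [|a l IH]; simpl; intros H Hi; [contradiction|].
assert (0 <= f a) by (apply H; auto).
assert (0 <= fold_right Rplus 0 (map f l)) by (apply fsum_ge0; auto).
destruct Hi as [<-|Hi]; [lra|].
assert (f i <= fold_right Rplus 0 (map f l)) by (apply IH; auto). lra.
Qed.

Lemma fsum_scal (c : R) (f : nat -> R) (l : list nat) :
  fold_right Rplus 0 (map (fun i => c * f i) l) = c * fold_right Rplus 0 (map f l).
Proof. induction l as [|a l IH]; simpl; [ring|]. rewrite IH; ring. Qed.

Lemma fsum_plus (f g : nat -> R) (l : list nat) :
  fold_right Rplus 0 (map (fun i => f i + g i) l) =
  fold_right Rplus 0 (map f l) + fold_right Rplus 0 (map g l).
Proof. induction l as [|a l IH]; simpl; [ring|]. rewrite IH; ring. Qed.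

Lemma fsum_swap (F : nat -> nat -> R) (l1 l2 : list nat) :
  fold_right Rplus 0 (map (fun i => fold_right Rplus 0 (map (fun j => F i j) l2)) l1) =
  fold_right Rplus 0 (map (fun j => fold_right Rplus 0 (map (fun i => F i j) l1)) l2).
Proof.
induction l1 as [|a l1 IH]; simpl.
- induction l2; simpl; auto. rewrite <- IHl2; ring.
- rewrite IH. rewrite <- fsum_plus. reflexivity.
Qed.

Lemma fsum_const (c : R) (l : list nat) :
  fold_right Rplus 0 (map (fun _ => c) l) = INR (length l) * c.
Proof.
induction l as [|a l IH]; [simpl; ring|]. cbn [map fold_right length]. rewrite IH, S_INR; ring.
Qed.

Lemma fsum_abs (f : nat -> R) (l : list nat) :
  Rabs (fold_right Rplus 0 (map f l)) <= fold_right Rplus 0 (map (fun i => Rabs (f i)) l).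
Proof.
induction l as [|a l IH]; simpl; [rewrite Rabs_R0; lra|].
eapply Rle_trans; [apply Rabs_triang|]. lra.
Qed.

Lemma fsum_eq0 (f : nat -> R) (l : list nat) :
  (forall i, In i l -> 0 <= f i) -> fold_right Rplus 0 (map f l) = 0 ->
  forall i, In i l -> f i = 0.
Proof.
intros H0 Hs i Hi.
assert (f i <= fold_right Rplus 0 (map f l)) by (apply fsum_term; auto).
assert (0 <= f i) by auto. lra.
Qed.

Lemma fmax_ge0 (f : nat -> R) (l : list nat) : 0 <= fold_right Rmax 0 (map f l).
Proof.
induction l as [|a l IH]; simpl; [lra|].
eapply Rle_trans; [exact IH| apply Rmax_r].
Qed.

Lemma fmax_term (f : nat -> R) (l : list nat) i :
  In i l -> f i <= fold_right Rmax 0 (map f l).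
Proof.
induction l as [|a l IH]; simpl; intros Hi; [contradiction|].
destruct Hi as [<-|Hi]; [apply Rmax_l|].
eapply Rle_trans; [apply IH; auto| apply Rmax_r].
Qed.

Lemma fmax_lub (f : nat -> R) (l : list nat) c :
  0 <= c -> (forall i, In i l -> f i <= c) -> fold_right Rmax 0 (map f l) <= c.
Proof.
induction l as [|a l IH]; simpl; intros Hc H; [lra|].
apply Rmax_lub; auto.
Qed.

Lemma fmax_le (f g : nat -> R) (l : list nat) :
  (forall i, In i l -> f i <= g i) ->
  fold_right Rmax 0 (map f l) <= fold_right Rmax 0 (map g l).
Proof.
intros H. apply fmax_lub; [apply fmax_ge0|].
intros i Hi. eapply Rle_trans; [apply H; auto| apply fmax_term; auto].
Qed.

Lemma fmax_scal (c : R) (f : nat -> R) (l : list nat) : 0 <= c ->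
  fold_right Rmax 0 (map (fun i => c * f i) l) = c * fold_right Rmax 0 (map f l).
Proof.
intros Hc; induction l as [|a l IH]; simpl; [ring|]. rewrite IH, RmaxRmult; auto.
Qed.

Lemma fmax_ext (f g : nat -> R) (l : list nat) :
  (forall i, In i l -> f i = g i) ->
  fold_right Rmax 0 (map f l) = fold_right Rmax 0 (map g l).
Proof.
induction l as [|a l IH]; simpl; intros H; [lra|].
rewrite (H a) by auto. rewrite IH by auto. reflexivity.
Qed.

Lemma fmax_0 (f : nat -> R) (l : list nat) :
  (forall i, In i l -> 0 <= f i) -> fold_right Rmax 0 (map f l) = 0 ->
  forall i, In i l -> f i = 0.
Proof.
intros H0 Hs i Hi. assert (f i <= fold_right Rmax 0 (map f l)) by (apply fmax_term; auto).
assert (0 <= f i) by auto. lra.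
Qed.

Lemma rpow_ge0 x y : 0 <= rpow x y.
Proof. unfold rpow; destruct (Rlt_dec 0 x); [left; apply exp_pos|lra]. Qed.

Lemma rpow_pos x y : 0 < x -> rpow x y = Rpower x y.
Proof. intros; unfold rpow; destruct (Rlt_dec 0 x); [auto|lra]. Qed.

Lemma rpow_gt0 x y : 0 < x -> 0 < rpow x y.
Proof. intros; rewrite rpow_pos by auto; apply exp_pos. Qed.

Lemma rpow_0 y : rpow 0 y = 0.
Proof. unfold rpow; destruct (Rlt_dec 0 0); [lra|auto]. Qed.

Lemma rpow_1 x : 0 <= x -> rpow x 1 = x.
Proof.
intros [H|<-]; [rewrite rpow_pos by auto; apply Rpower_1; auto| apply rpow_0].
Qed.

Lemma rpow_le1 x y : 0 <= x -> 0 < y -> (rpow x y <= 1 <-> x <= 1).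
Proof.
intros [Hx|<-] Hy; [|rewrite rpow_0; lra].
rewrite rpow_pos by auto. unfold Rpower. split; intros H.
- destruct (Rle_lt_dec x 1) as [|H1]; auto.
  apply ln_increasing in H1; [|lra]. rewrite ln_1 in H1.
  assert (1 < exp (y * ln x)). { rewrite <- exp_0. apply exp_increasing. nra. }
  lra.
- destruct H as [H|H].
  + apply ln_increasing in H; [|lra]. rewrite ln_1 in H.
    rewrite <- exp_0. left. apply exp_increasing. nra.
  + subst. rewrite ln_1, Rmult_0_r, exp_0. lra.
Qed.

Lemma rpow_mul a b y : 0 <= a -> 0 <= b -> 0 < y -> rpow (a * b) y = rpow a y * rpow b y.
Proof.
intros [Ha|<-] [Hb|<-] Hy; try (rewrite ?Rmult_0_l, ?Rmult_0_r, ?rpow_0; ring).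
rewrite !rpow_pos by (try apply Rmult_lt_0_compat; auto).
symmetry; apply Rpower_mult_distr; auto.
Qed.

Lemma rpow_rpow x y z : 0 <= x -> 0 < y -> rpow (rpow x y) z = rpow x (y * z).
Proof.
intros [Hx|<-] Hy; [|rewrite !rpow_0; auto].
rewrite (rpow_pos x y) by auto. rewrite !rpow_pos by (auto; apply exp_pos).
apply Rpower_mult.
Qed.

Lemma rpow_plus x y z : 0 < x -> rpow x (y + z) = rpow x y * rpow x z.
Proof. intros; rewrite !rpow_pos by auto; apply Rpower_plus. Qed.

Lemma rpow_mono a b y : 0 <= a <= b -> 0 < y -> rpow a y <= rpow b y.
Proof.
intros [[Ha|<-] Hab] Hy; [|rewrite rpow_0; apply rpow_ge0].
rewrite !rpow_pos by lra. apply Rle_Rpower_l; lra.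
Qed.

Lemma rpow_eq0 x y : 0 <= x -> rpow x y = 0 -> x = 0.
Proof. intros [H|H] E; auto. pose proof (rpow_gt0 x y H). lra. Qed.

Lemma rpow_le_self x r : 0 <= x <= 1 -> 1 <= r -> rpow x r <= x.
Proof.
intros [[Hx|<-] H1] Hr; [|rewrite rpow_0; lra].
rewrite rpow_pos by auto. unfold Rpower.
destruct H1 as [H1|H1]; [|subst x; rewrite ln_1, Rmult_0_r, exp_0; lra].
apply ln_increasing in H1; auto. rewrite ln_1 in H1.
rewrite <- (exp_ln x) at 2 by auto.
destruct (Rle_lt_or_eq_dec _ _ Hr) as [Hr'|<-]; [left; apply exp_increasing; nra| rewrite Rmult_1_l; lra].
Qed.


Lemma vnorm_ge0 p n x : 0 <= vnorm p n x.
Proof. destruct p; simpl; [apply rpow_ge0| apply fmax_ge0]. Qed.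

Lemma vnorm_ext p n x y : (forall i, (i < n)%nat -> x i = y i) -> vnorm p n x = vnorm p n y.
Proof.
intros H; destruct p; simpl; unfold sumn, maxn.
- f_equal. apply fsum_ext. intros i Hi; apply in_seq in Hi. rewrite H by lia; auto.
- apply fmax_ext. intros i Hi; apply in_seq in Hi. rewrite H by lia; auto.
Qed.

Lemma sumS_ge0 n (f : nat -> R) r : 0 <= sumn n (fun i => rpow (f i) r).
Proof. apply fsum_ge0; intros; apply rpow_ge0. Qed.

Lemma coord_le p n x i : valid_pexp p -> (i < n)%nat -> Rabs (x i) <= vnorm p n x.
Proof.
intros Hp Hi; destruct p as [r|]; simpl in *.
- assert (H : rpow (Rabs (x i)) r <= sumn n (fun i => rpow (Rabs (x i)) r)).
  { apply (fsum_term (fun i => rpow (Rabs (x i)) r)).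
    intros; apply rpow_ge0. apply in_seq; lia. }
  rewrite <- (rpow_1 (Rabs (x i))) at 1 by apply Rabs_pos.
  replace 1 with (r * / r) by (field; lra).
  rewrite <- rpow_rpow by (try apply Rabs_pos; lra).
  apply rpow_mono; [split; [apply rpow_ge0|auto]|].
  apply Rinv_0_lt_compat; lra.
- apply (fmax_term (fun i => Rabs (x i))). apply in_seq; lia.
Qed.

Lemma vnorm_scal p n x c : valid_pexp p ->
  vnorm p n (fun i => c * x i) = Rabs c * vnorm p n x.
Proof.
intros Hp; destruct p as [r|]; simpl in *; unfold sumn, maxn.
- rewrite (fsum_ext _ (fun i => rpow (Rabs c) r * rpow (Rabs (x i)) r)).
  2:{ intros i _. rewrite Rabs_mult. apply rpow_mul; try apply Rabs_pos; lra. }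
  rewrite fsum_scal. rewrite rpow_mul; try apply rpow_ge0.
  2:{ apply fsum_ge0; intros; apply rpow_ge0. }
  2:{ apply Rinv_0_lt_compat; lra. }
  rewrite rpow_rpow by (try apply Rabs_pos; lra).
  replace (r * / r) with 1 by (field; lra). rewrite rpow_1 by apply Rabs_pos. auto.
- rewrite (fmax_ext _ (fun i => Rabs c * Rabs (x i))).
  2:{ intros i _. apply Rabs_mult. }
  apply fmax_scal, Rabs_pos.
Qed.

Lemma vnorm_eq0 p n x : valid_pexp p -> vnorm p n x = 0 -> forall i, (i < n)%nat -> x i = 0.
Proof.
intros Hp H i Hi. pose proof (coord_le p n x i Hp Hi).
pose proof (Rabs_pos (x i)). assert (Rabs (x i) = 0) by lra.
destruct (Req_dec (x i) 0); auto. apply Rabs_no_R0 in H3; tauto.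
Qed.

Definition pcore (p : pexp) (n : nat) (x : vec) : R :=
  match p with
  | PFin r => sumn n (fun i => rpow (Rabs (x i)) r)
  | PInf => maxn n (fun i => Rabs (x i))
  end.

Lemma vnorm_le1 p n x : valid_pexp p -> (vnorm p n x <= 1 <-> pcore p n x <= 1).
Proof.
intros Hp; destruct p as [r|]; simpl in *; [|tauto].
apply rpow_le1; [apply sumS_ge0| apply Rinv_0_lt_compat; lra].
Qed.

Definition cstn (p : pexp) (n : nat) : R :=
  match p with PFin r => rpow (INR n) (/ r) | PInf => 1 end.

Lemma cstn_ge0 p n : 0 <= cstn p n.
Proof. destruct p; simpl; [apply rpow_ge0|lra]. Qed.

Lemma valid_dual p : valid_pexp p -> valid_pexp (dual_pexp p).
Proof.
destruct p as [r|]; simpl; [|lra]. intros H.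
destruct (Req_EM_T r 1); simpl; auto.
assert (1 < r) by lra. apply (Rmult_le_reg_r (r - 1)); [lra|].
unfold Rdiv. rewrite Rmult_assoc, Rinv_l by lra. lra.
Qed.

Lemma dual_bound p n z mu : valid_pexp p -> 0 <= mu ->
  (forall i, (i < n)%nat -> Rabs (z i) <= mu) ->
  vnorm p n z <= cstn p n * mu.
Proof.
intros Hp Hmu H; destruct p as [r|]; simpl in *; unfold sumn, maxn.
- assert (S : fold_right Rplus 0 (map (fun i => rpow (Rabs (z i)) r) (seq 0 n))
     <= INR n * rpow mu r).
  { rewrite <- (length_seq n 0) at 2. rewrite <- fsum_const. apply fsum_le.
    intros i Hi; apply in_seq in Hi. apply rpow_mono; [|lra].
    split; [apply Rabs_pos| apply H; lia]. }
  eapply Rle_trans. apply rpow_mono; [split; [apply fsum_ge0; intros; apply rpow_ge0|exact S]|].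
  apply Rinv_0_lt_compat; lra.
  rewrite rpow_mul; [| apply pos_INR| apply rpow_ge0| apply Rinv_0_lt_compat; lra].
  rewrite rpow_rpow by lra. replace (r * / r) with 1 by (field; lra).
  rewrite rpow_1 by lra. lra.
- rewrite Rmult_1_l. apply fmax_lub; auto. intros i Hi; apply in_seq in Hi; apply H; lia.
Qed.

Lemma ent_bound p m n M : valid_pexp p ->
  (forall j, (j < n)%nat -> vnorm p m (fun i => M i j) <= 1) ->
  entnorm p m n M <= cstn p n.
Proof.
intros Hp H; destruct p as [r|]; simpl in *; unfold sumn, maxn.
- apply rpow_mono; [|apply Rinv_0_lt_compat; lra]. split.
  + apply fsum_ge0; intros; apply fsum_ge0; intros; apply rpow_ge0.
  + rewrite (fsum_swap (fun i j => rpow (Rabs (M i j)) r)).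
    rewrite <- (length_seq n 0) at 2. rewrite <- (Rmult_1_r (INR _)), <- fsum_const.
    apply fsum_le. intros j Hj; apply in_seq in Hj.
    pose proof (H j ltac:(lia)) as Hj'. apply (vnorm_le1 (PFin r)) in Hj'; auto.
- apply fmax_lub; [lra|]. intros i Hi; apply in_seq in Hi.
  apply fmax_lub; [lra|]. intros j Hj; apply in_seq in Hj.
  eapply Rle_trans; [|apply (H j); lia]. apply (fmax_term (fun i => Rabs (M i j))).
  apply in_seq; lia.
Qed.

Lemma cstn_prod p n : valid_pexp p -> cstn p n * cstn (dual_pexp p) n <= INR n.
Proof.
intros Hp. destruct n as [|n].
{ destruct p as [r|]; simpl; [rewrite rpow_0; lra|]. destruct (Req_EM_T 1 1); [|lra].
  simpl. rewrite rpow_0; lra. }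
assert (Hn' : 0 < INR (S n)) by (apply lt_0_INR; lia).
destruct p as [r|]; simpl in *.
- destruct (Req_EM_T r 1) as [->|Hr]; simpl.
  + rewrite Rinv_1, rpow_1 by lra. lra.
  + rewrite <- rpow_plus by auto.
    replace (/ r + / (r / (r - 1))) with 1 by (field; split; lra).
    rewrite rpow_1; lra.
- rewrite Rinv_1, rpow_1; lra.
Qed.

Lemma rpow_abs_cont r : 1 <= r -> forall t, continuity_pt (fun t => rpow (Rabs t) r) t.
Proof.
intros Hr t. destruct (Req_dec t 0) as [->|Ht].
- intros eps Heps. exists (Rmin 1 eps). split; [apply Rmin_pos; lra|].
  intros x [_ Hx]. simpl in *. unfold R_dist in *. rewrite Rminus_0_r in Hx.
  rewrite Rabs_R0, rpow_0, Rminus_0_r, Rabs_pos_eq by apply rpow_ge0.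
  assert (Rabs x <= 1) by (pose proof (Rmin_l 1 eps); lra).
  pose proof (Rmin_r 1 eps).
  eapply Rle_lt_trans; [apply rpow_le_self; auto; split; auto; apply Rabs_pos|lra].
- set (h := fun u => exp (r * ln (Rabs u))).
  assert (Hh : continuity_pt h t).
  { unfold h. apply (continuity_pt_comp (fun u => r * ln (Rabs u)) exp).
    - apply continuity_pt_mult; [apply continuity_pt_const; intros ? ?; reflexivity|].
      apply (continuity_pt_comp Rabs ln); [apply Rcontinuity_abs|].
      apply derivable_continuous_pt. exists (/ Rabs t).
      apply derivable_pt_lim_ln. apply Rabs_pos_lt; auto.
    - apply derivable_continuous_pt, derivable_pt_exp. }
  assert (E : forall u, u <> 0 -> rpow (Rabs u) r = h u).
  { intros u Hu. rewrite rpow_pos by (apply Rabs_pos_lt; auto). reflexivity. }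
  intros eps Heps. destruct (Hh eps Heps) as [alp [Halp H]].
  exists (Rmin alp (Rabs t)). split; [apply Rmin_pos; auto; apply Rabs_pos_lt; auto|].
  intros x [Dx Hx]. simpl in *. unfold R_dist in *.
  assert (x <> 0).
  { intros ->. rewrite Rminus_0_l, Rabs_Ropp in Hx. pose proof (Rmin_r alp (Rabs t)). lra. }
  rewrite (E x), (E t) by auto. apply H. split; auto.
  pose proof (Rmin_l alp (Rabs t)). lra.
Qed.

Lemma coord_le1 p n x i : valid_pexp p -> (i < n)%nat -> pcore p n x <= 1 -> Rabs (x i) <= 1.
Proof.
intros Hp Hi H. eapply Rle_trans; [apply coord_le; eauto|]. apply vnorm_le1; auto.
Qed.


From HB Require Import structures.
From mathcomp Require Import all_boot all_order all_algebra all_fingroup.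
From mathcomp Require Import all_classical all_reals all_analysis.
From mathcomp Require Import Rstruct Rstruct_topology.
Import Order.TTheory GRing.Theory Num.Theory.
Import numFieldNormedType.Exports.
Set Implicit Arguments.
Unset Strict Implicit.
Unset Printing Implicit Defensive.

Section AbsSec.
Local Open Scope ring_scope.
Local Open Scope classical_set_scope.

Section Abs.
Variable F : realType.

Lemma cont_sum (T : topologicalType) (I : Type) (r : seq I) (P : pred I)
  (f : I -> T -> F) : (forall i, continuous (f i)) ->
  continuous (fun t => \sum_(i <- r | P i) f i t).
Proof.
move=> fc; elim: r => [|a r IH].
  by under eq_fun do rewrite big_nil; exact: cst_continuous.
under eq_fun do rewrite big_cons.
case: (P a) => //= x; exact: (continuousD (fc a x) (IH x)).
Qed.

Lemma cont_prod (T : topologicalType) (I : Type) (r : seq I) (P : pred I)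
  (f : I -> T -> F) : (forall i, continuous (f i)) ->
  continuous (fun t => \prod_(i <- r | P i) f i t).
Proof.
move=> fc; elim: r => [|a r IH].
  by under eq_fun do rewrite big_nil; exact: cst_continuous.
under eq_fun do rewrite big_cons.
case: (P a) => //= x; exact: (continuousM (fc a x) (IH x)).
Qed.

Lemma det_cont n : continuous (fun v : 'rV[F]_(n * n) => \det (vec_mx v)).
Proof.
rewrite /determinant; apply: cont_sum => s x.
have hp : continuous (fun v : 'rV[F]_(n * n) => \prod_i (vec_mx v) i (s i)).
  apply: cont_prod => i y.
  under eq_fun do rewrite mxE.
  exact: coord_continuous.
exact: (continuousM (@cst_continuous _ _ _ x) (hp x)).
Qed.

Definition colrep n (Z : 'M[F]_n) (i : 'I_n) (w : 'cV[F]_n) : 'M[F]_n :=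
  \matrix_(a, b) if b == i then w a 0 else Z a b.

Lemma det_colrep n (Z : 'M[F]_n) i w : \det (colrep Z i w) = (\adj Z *m w) i 0.
Proof.
rewrite (expand_det_col _ i) mxE; apply: eq_bigr => a _.
rewrite !mxE eqxx mulrC; congr (_ * _).
rewrite /cofactor; congr (_ * \det _); apply/matrixP => x y.
by rewrite !mxE eq_sym (negbTE (neq_lift i y)).
Qed.

Lemma col_colrep n (Z : 'M[F]_n) i w j :
  col j (colrep Z i w) = if j == i then w else col j Z.
Proof.
apply/matrixP => x y; rewrite !mxE [y]ord1; case: (j == i) => //.
by rewrite mxE.
Qed.

Lemma auer_abs n (g : 'cV[F]_n -> F) :
  (forall j, continuous (fun v : 'rV[F]_(n * n) => g (col j (vec_mx v)))) ->
  (exists2 C, 0 <= C & forall w, g w <= 1 -> forall i, `|w i 0| <= C) ->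
  (exists (Z0 : 'M[F]_n), \det Z0 != 0 /\ forall j, g (col j Z0) <= 1) ->
  exists (Z : 'M[F]_n), \det Z != 0 /\ (forall j, g (col j Z) <= 1) /\
     forall i w, g w <= 1 -> `|(\adj Z *m w) i 0| <= `|\det Z|.
Proof.
move=> gc [C C0 gb] [Z0 [dZ0 fZ0]].
pose S := [set v : 'rV[F]_(n * n) | forall j, g (col j (vec_mx v)) <= 1].
have cS : compact S.
  apply: bounded_closed_compact.
    rewrite /bounded_set /= /bounded_near.
    near=> M => v Sv /=.
    apply: (@le_trans _ _ C).
      rewrite [`|v|]/Num.Def.normr /= mx_normrE.
      apply: bigmax_le => // -[k l] _ /=.
      rewrite [k]ord1; case/mxvec_indexP: l => i j.
      have := gb _ (Sv j) i; by rewrite !mxE.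
    near: M; apply: nbhs_pinfty_ge; exact: num_real.
  have -> : S = \bigcap_(j in setT) ((fun v => g (col j (vec_mx v))) @^-1` [set x | x <= 1]).
    apply/seteqP; split => v /= H j; first by move=> _; exact: H.
    exact: (H j I).
  apply: closed_bigI => j _; apply: preimage_closed; last exact: closed_le.
  by move=> x _; apply: gc.
have S0 : S !=set0 by exists (mxvec Z0) => j /=; rewrite mxvecK.
have fc : {within S, continuous (fun v : 'rV[F]_(n * n) => `|\det (vec_mx v)|)}.
  apply: continuous_subspaceT => x.
  exact: (continuous_comp (@det_cont n x) (@norm_continuous _ F^o _)).
have [c /set_mem Sc cmax] := compact_EVT_max S0 cS fc.
exists (vec_mx c); split; last split.
- have := cmax (mxvec Z0); rewrite mxvecK => /(_ (mem_set _)).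
  move=> H; apply: contraNneq dZ0 => D0.
  rewrite -normr_eq0 eq_le normr_ge0 andbT; apply: le_trans (H _) _.
    by move=> j; rewrite mxvecK.
  by rewrite D0 normr0.
- exact: Sc.
- move=> i w gw; rewrite -det_colrep.
  have := cmax (mxvec (colrep (vec_mx c) i w)); rewrite mxvecK; apply.
  apply: mem_set => j /=; rewrite mxvecK col_colrep.
  by case: (j == i) => //; exact: Sc.
Unshelve. all: by end_near.
Qed.
End Abs.

End AbsSec.

Section Bridge.
Local Open Scope ring_scope.

Lemma fsum_big (f : nat -> R) s n :
  fold_right Rplus 0%R (map f (List.seq s n)) = \sum_(s <= i < s + n) f i.
Proof.
elim: n s => [|n IH] s /=; first by rewrite addn0 big_geq.
rewrite IH big_ltn ?addnS ?ltnS ?leq_addr //.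
Qed.

Lemma sumn_big n (f : nat -> R) : Defs.sumn n f = \sum_(i < n) f i.
Proof. by rewrite /Defs.sumn fsum_big add0n big_mkord. Qed.

Lemma cont_fsum (T : topologicalType) (l : list nat) (f : nat -> T -> R) :
  (forall i, continuous (f i)) ->
  continuous (fun t => fold_right Rplus 0%R (map (fun i => f i t) l)).
Proof.
move=> fc; elim: l => [|a l IH] /=; first exact: cst_continuous.
under eq_fun do rewrite RplusE.
move=> x; exact: (@continuousD R R^o T _ _ x (fc a x) (IH x)).
Qed.

Lemma cont_fmax (T : topologicalType) (l : list nat) (f : nat -> T -> R) :
  (forall i, continuous (f i)) ->
  continuous (fun t => fold_right Rmax 0%R (map (fun i => f i t) l)).
Proof.
move=> fc; elim: l => [|a l IH] /=; first exact: cst_continuous.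
under eq_fun do rewrite RmaxE.
move=> x; exact: (continuous_max (fc a x) (IH x)).
Qed.

Lemma cont_rpow_abs r : Rle 1 r -> continuous (fun t : R => rpow (Rabs t) r).
Proof. move=> Hr t. have H := proj1 (continuity_pt_cvg _ _) (rpow_abs_cont r Hr t). exact: H. Qed.

End Bridge.


Section Concrete.
Local Open Scope ring_scope.
Variables (m k : nat) (A : mat) (p : pexp).
Hypothesis Hp : valid_pexp p.
Hypothesis Hfr : full_col_rank m k.+1 A.

Local Notation N := k.+1.
Definition toVec (w : 'cV[R]_N) : vec := fun l => if (l < N)%N then w (inord l) 0 else 0.
Definition toMat (X : 'M[R]_N) : mat :=
  fun i j => if (i < N)%N && (j < N)%N then X (inord i) (inord j) else 0.
Definition Am : 'M[R]_(m, N) := \matrix_(i, j) A i j.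
Definition g (w : 'cV[R]_N) : R := pcore p m (mulmv N A (toVec w)).

Lemma mulmv_toVec w (a : nat) : mulmv N A (toVec w) a = \sum_(l < N) A a l * w l 0.
Proof.
rewrite /mulmv sumn_big; apply: eq_bigr => l _.
by rewrite /toVec ltn_ord inord_val.
Qed.

Lemma Am_mul w (a : 'I_m) : (Am *m w) a 0 = mulmv N A (toVec w) a.
Proof. by rewrite mulmv_toVec mxE; apply: eq_bigr => l _; rewrite mxE. Qed.

Lemma fcr (w : 'cV[R]_N) : Am *m w = 0 -> w = 0.
Proof.
move=> H; apply/matrixP => l j; rewrite [j]ord1 mxE.
have H0 : forall i, (i < m)%coq_nat -> mulmv N A (toVec w) i = 0.
  move=> i Hi; have := Am_mul w (Ordinal (introT ssrnat.ltP Hi)).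
  by rewrite H mxE => <-.
have := Hfr H0 (elimT ssrnat.ltP (ltn_ord l)).
by rewrite /toVec ltn_ord inord_val.
Qed.

Lemma left_inv : exists L : 'M[R]_(N, m), L *m Am = 1%:M.
Proof.
have : row_free Am^T.
  rewrite -kermx_eq0; apply/eqP/row_matrixP => i; rewrite row0.
  have Hk : row i (kermx Am^T) *m Am^T = 0.
    by apply/sub_kermxP; exact: row_sub.
  have : Am *m (row i (kermx Am^T))^T = 0.
    by have := congr1 trmx Hk; rewrite trmx_mul trmxK trmx0.
  by move/fcr/(congr1 trmx); rewrite trmxK trmx0.
case/row_freeP => B HB; exists B^T.
by have := congr1 trmx HB; rewrite trmx_mul trmxK trmx1.
Qed.

Lemma g_bound : exists2 C, 0 <= C & forall w, g w <= 1 -> forall i, `|w i 0| <= C.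
Proof.
have [L HL] := left_inv.
exists (\sum_i \sum_a `|L i a|); first by do 2 (apply: sumr_ge0 => ? _).
move=> w gw i.
have -> : w = L *m (Am *m w) by rewrite mulmxA HL mul1mx.
rewrite mxE; apply: le_trans (ler_norm_sum _ _ _) _.
apply: (@le_trans _ _ (\sum_a `|L i a|)).
  apply: ler_sum => a _; rewrite normrM -[leRHS]mulr1 ler_wpM2l //.
  rewrite Am_mul -RabsE; apply/RleP; apply: (coord_le1 p m) => //.
    exact/ssrnat.ltP.
  exact/RleP.
rewrite (bigD1 i) //= lerDl; apply: sumr_ge0 => ? _; apply: sumr_ge0 => ? _.
exact: normr_ge0.
Qed.


Lemma g_cont j : continuous (fun v : 'rV[R]_(N * N) => g (col j (vec_mx v))).
Proof.
have hx : forall l, continuous (fun v : 'rV[R]_(N * N) => toVec (col j (vec_mx v)) l).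
  move=> l; rewrite /toVec; case: ltnP => _; last exact: cst_continuous.
  under eq_fun do rewrite !mxE.
  exact: coord_continuous.
have hm : forall a, continuous (fun v : 'rV[R]_(N * N) => mulmv N A (toVec (col j (vec_mx v))) a).
  move=> a; rewrite /mulmv /Defs.sumn.
  have := (@cont_fsum _ (List.seq 0 N) (fun l v => A a l * toVec (col j (vec_mx v)) l)).
  apply => l x.
  exact: (continuousM (@cst_continuous _ _ _ x) (hx l x)).
rewrite /g /pcore; case: p Hp => [r|] Hr.
  rewrite /Defs.sumn.
  have := (@cont_fsum _ (List.seq 0 m) (fun a v => rpow (Rabs (mulmv N A (toVec (col j (vec_mx v))) a)) r)).
  apply => a x.
  have := continuous_comp (hm a x) (@cont_rpow_abs r Hr (mulmv N A (toVec (col j (vec_mx x))) a)).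
  by apply.
rewrite /Defs.maxn.
have := (@cont_fmax _ (List.seq 0 m) (fun a v => Rabs (mulmv N A (toVec (col j (vec_mx v))) a))).
apply => a x.
have := continuous_comp (hm a x) (@norm_continuous _ R^o (mulmv N A (toVec (col j (vec_mx x))) a)).
by apply.
Qed.

Lemma g_vnorm w : g w <= 1 <-> Rle (vnorm p m (mulmv N A (toVec w))) 1.
Proof. rewrite vnorm_le1 //; split => /RleP //. Qed.

Lemma Z0_ex : exists Z0 : 'M[R]_N, \det Z0 != 0 /\ forall j, g (col j Z0) <= 1.
Proof.
pose s j := vnorm p m (fun a => A a j).
have spos : forall j : 'I_N, 0 < s j.
  move=> j; rewrite lt_def; apply/andP; split; last exact/RleP/vnorm_ge0.
  apply/eqP => /(vnorm_eq0 p m _ Hp) H0.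
  have : Am *m col j 1%:M = 0.
    rewrite colE mul1mx -colE; apply/matrixP => a b; rewrite !mxE.
    by apply: H0; apply/ssrnat.ltP.
  move/fcr/matrixP/(_ j 0); rewrite !mxE eqxx /=.
  by move/eqP; rewrite oner_eq0.
pose d : 'rV[R]_N := \row_j (s j)^-1.
exists (diag_mx d); split.
  rewrite det_diag; apply/prodf_neq0 => j _; rewrite mxE invr_eq0.
  exact: lt0r_neq0.
move=> j; apply/g_vnorm.
rewrite (vnorm_ext p m _ (fun a => (s j)^-1 * A a j)); last first.
  move=> a /ssrnat.ltP Ha.
  rewrite -(Am_mul _ (Ordinal Ha)).
  by rewrite colE mulmxA mul_mx_diag -colE !mxE mulrC.
rewrite vnorm_scal // RabsE gtr0_norm ?invr_gt0 //.
have -> : Rmult (s j)^-1 (s j) = 1 by rewrite RmultE mulVf //; exact: lt0r_neq0.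
exact: Rle_refl.
Qed.


Lemma toMat_mul X Y i j : (i < N)%N -> (j < N)%N ->
  mulmm N (toMat X) (toMat Y) i j = toMat (X *m Y) i j.
Proof.
move=> Hi Hj; rewrite /mulmm sumn_big /toMat Hi Hj /= mxE.
by apply: eq_bigr => l _; rewrite ltn_ord /= inord_val.
Qed.

Lemma toMat_1 i j : (i < N)%N -> (j < N)%N -> toMat 1%:M i j = Defs.idm i j.
Proof.
move=> Hi Hj; rewrite /toMat Hi Hj mxE /Defs.idm.
case: Nat.eq_dec => [<-|Hne]; first by rewrite eqxx.
have : inord i != inord j :> 'I_N.
  by apply/eqP => /(congr1 val); rewrite /= !inordK.
by move/negbTE => ->.
Qed.

Lemma auer_succ : exists Rm Z : mat, inverse_of N Rm Z /\
  (forall j, (j < N)%coq_nat -> Rle (vnorm p m (fun i => mulmm N A Z i j)) 1) /\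
  (forall y i, (i < N)%coq_nat -> Rle (Rabs (y i)) (vnorm p m (mulmv N (mulmm N A Z) y))).
Proof.
have [Z [dZ [gZ hZ]]] := auer_abs g_cont g_bound Z0_ex.
have Zu : Z \in unitmx by rewrite unitmxE unitfE.
exists (toMat (invmx Z)), (toMat Z); split; [|split].
- split => i j /ssrnat.ltP Hi /ssrnat.ltP Hj; rewrite toMat_mul //.
    by rewrite mulVmx // toMat_1.
  by rewrite mulmxV // toMat_1.
- move=> j /ssrnat.ltP Hj.
  rewrite (vnorm_ext p m _ (mulmv N A (toVec (col (inord j) Z)))).
    by apply/g_vnorm; exact: gZ.
  move=> a _; rewrite /mulmm /mulmv !sumn_big; apply: eq_bigr => l _.
  by rewrite /toMat /toVec ltn_ord Hj /= !mxE.
- move=> y i /ssrnat.ltP Hi.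
  pose u : 'cV[R]_N := \col_l y l.
  pose w := Z *m u.
  have Hw : forall a, mulmv N (mulmm N A (toMat Z)) y a = mulmv N A (toVec w) a.
    move=> a; rewrite mulmv_toVec /mulmv sumn_big.
    under eq_bigr do rewrite /mulmm sumn_big RmultE mulr_suml.
    rewrite exchange_big; apply: eq_bigr => t _.
    rewrite !mxE mulr_sumr; apply: eq_bigr => l _.
    by rewrite /toMat !ltn_ord /= !inord_val mxE mulrA.
  rewrite (vnorm_ext p m _ (mulmv N A (toVec w))); last by move=> a _; exact: Hw.
  set s := vnorm p m _.
  have s0 : 0 <= s by apply/RleP; exact: vnorm_ge0.
  have yi : y i = u (inord i) 0 by rewrite mxE inordK.
  case: (eqVneq s 0) => [Hs|Hs].
    have w0 : w = 0.
      apply/matrixP => t c; rewrite [c]ord1 [RHS]mxE.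
      have := Hfr (z := toVec w) (vnorm_eq0 p m _ Hp Hs) (elimT ssrnat.ltP (ltn_ord t)).
      by rewrite /toVec ltn_ord inord_val; apply.
    have u0 : u = 0 by rewrite -[u](mulKmx Zu) -/w w0 mulmx0.
    by rewrite Hs yi u0 mxE Rabs_R0; exact: Rle_refl.
  have spos : 0 < s by rewrite lt_def Hs.
  pose w' := s^-1 *: w.
  have gw' : g w' <= 1.
    apply/g_vnorm.
    rewrite (vnorm_ext p m _ (fun a => s^-1 * mulmv N A (toVec w) a)); last first.
      move=> a _; rewrite !mulmv_toVec mulr_sumr; apply: eq_bigr => l _.
      by rewrite !mxE mulrCA.
    rewrite vnorm_scal // RabsE gtr0_norm ?invr_gt0 //.
    have -> : Rmult s^-1 s = 1 by rewrite RmultE mulVf.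
    exact: Rle_refl.
  have := hZ (inord i) w' gw'.
  have -> : \adj Z *m w' = s^-1 *: (\det Z *: u).
    by rewrite /w' /w -scalemxAr mulmxA mul_adj_mx mul_scalar_mx.
  rewrite !mxE inordK // !normrM => H.
  apply/RleP; rewrite RabsE.
  have D0 : 0 < `|\det Z| by rewrite normr_gt0.
  have ns : `|s^-1| = s^-1 by rewrite gtr0_norm ?invr_gt0.
  rewrite ns in H.
  have H2 : `|\det Z| * (s^-1 * `|y i|) <= `|\det Z| * 1.
    by rewrite mulr1 mulrCA.
  rewrite ler_pM2l // in H2.
  have -> : `|y i| = s * (s^-1 * `|y i|).
    by rewrite mulrA mulfV ?mul1r //; exact: lt0r_neq0.
  by rewrite -[leRHS]mulr1 ler_wpM2l // ltW.
Qed.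

End Concrete.


Open Scope R_scope.

Lemma auerbach m n A p : valid_pexp p -> full_col_rank m n A ->
  exists Rm Z : mat, inverse_of n Rm Z /\
  (forall j, (lt j n) -> vnorm p m (fun i => mulmm n A Z i j) <= 1) /\
  (forall y i, (lt i n) -> Rabs (y i) <= vnorm p m (mulmv n (mulmm n A Z) y)).
Proof.
intros Hp Hfr. destruct n as [|k].
- exists Defs.idm, Defs.idm. split; [split; intros; lia|].
  split; intros; lia.
- exact (auer_succ Hp Hfr).
Qed.

Lemma glb_exists (S : R -> Prop) t0 : S t0 -> (forall t, S t -> 0 <= t) ->
  exists k, is_glb S k /\ k <= t0.
Proof.
intros H0 Hpos.
destruct (completeness (fun x => S (- x))) as [l [Hub Hlub]].
- exists 0. intros x Hx. apply Hpos in Hx. lra.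
- exists (- t0). rewrite Ropp_involutive. auto.
- exists (- l). split; [split|].
  + intros y Hy. assert (- y <= l) by (apply Hub; rewrite Ropp_involutive; auto). lra.
  + intros x' Hx'. assert (l <= - x'); [|lra].
    apply Hlub. intros x Hx. apply Hx' in Hx. lra.
  + assert (- t0 <= l) by (apply Hub; rewrite Ropp_involutive; auto). lra.
Qed.

Theorem mainTheorem2 (m n : nat) (A : mat) (p : pexp) :
  full_col_rank m n A -> valid_pexp p ->
  exists Rm Rinv : mat, inverse_of n Rm Rinv /\
    exists k : R, cond_number_is p m n (mulmm n A Rinv) k /\ k <= INR n.
Proof.
intros Hfr Hp.
destruct (@auerbach m n A p Hp Hfr) as (Rm & Z & Hinv & Hcol & Hy).
exists Rm, Z. split; auto.
set (M := mulmm n A Z).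
set (a := cstn p n). set (b := cstn (dual_pexp p) n).
assert (Hc : conditioned p m n M a b).
{ split.
  - apply ent_bound; auto.
  - intros z. apply dual_bound; [apply valid_dual; auto| apply vnorm_ge0|].
    intros i Hi. apply Hy; auto. }
destruct (@glb_exists (cond_products p m n M) (a * b)) as [k [Hk Hkle]].
- exists a, b. split; [apply cstn_ge0|]. split; [apply cstn_ge0|]. split; [exact Hc| reflexivity].
- intros t (al & be & Ha & Hb & _ & ->). apply Rmult_le_pos; auto.
- exists k. split; [exact Hk|]. eapply Rle_trans; [exact Hkle|]. apply cstn_prod; auto.
Qed.
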